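(* Let $n\geq4$ with $n\not\equiv 0 \pmod 3$, let $R=K[x_1,\ldots,x_n]$ with $\mathfrak m=(x_1,\ldots,x_n)$, and let $I_n=NI(C_n)=(x_{i-1}x_ix_{i+1}: i=1,\ldots,n)$ (indices modulo $n$) be the closed neighborhood ideal of the $n$-cycle. Then $\mathrm{depth}(R/I_n^{\,n-1})=0$. In particular, $\mathfrak m\in\mathrm{Ass}(R/I_n^{\,n-1})$ and $\lim_{k\to\infty}\mathrm{depth}(R/I_n^k)=0$.
   Context: $C_n$ is the cycle with vertices $1,\ldots,n$ and edges $\{i,i+1\}$ ($1\le i\le n-1$) and $\{n,1\}$. For a simple graph $G$, $N_G[i]=\{j:\{i,j\}\in E(G)\}\cup\{i\}$ and $NI(G)=(\prod_{j\in N_G[i]}x_j : i\in V(G))$. *)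

(* Defs.v *)
From HB Require Import structures.
From mathcomp Require Import all_boot all_order all_algebra.
From mathcomp Require Import mpoly.
Set Implicit Arguments. Unset Strict Implicit. Unset Printing Implicit Defensive.
Import GRing.Theory.
Local Open Scope ring_scope.

Section Defs.
Variables (K : fieldType) (n : nat).
Notation R := {mpoly K[n]}.

Definition in_ideal (gens : seq R) (p : R) : Prop :=
  exists c : 'I_(size gens) -> R, p = \sum_(i < size gens) c i * nth 0 gens i.

Definition ideal_pow (gens : seq R) (k : nat) : seq R :=
  [seq \prod_(j < k) nth 0 gens (f j) | f : {ffun 'I_k -> 'I_(size gens)}].

Definition max_ideal : seq R := [seq 'X_i | i <- enum 'I_n].

Definition cycle_adj (i j : 'I_n) : bool :=
  ((val j == (val i).+1 %% n) || (val i == (val j).+1 %% n))%N.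

Definition NI (adj : rel 'I_n) : seq R :=
  [seq \prod_(j : 'I_n | adj i j || (j == i)) 'X_j | i <- enum 'I_n].

Definition NI_cycle : seq R := NI cycle_adj.

Definition regular_seq (J : seq R) (s : seq R) : Prop :=
  (forall i, (i < size s)%N -> in_ideal max_ideal (nth 0 s i)) /\
  (forall i, (i < size s)%N -> forall g : R,
      in_ideal (J ++ take i s) (nth 0 s i * g) -> in_ideal (J ++ take i s) g) /\
  ~ in_ideal (J ++ s) 1.

Definition has_depth (J : seq R) (d : nat) : Prop :=
  (exists s, regular_seq J s /\ size s = d) /\
  (forall s, regular_seq J s -> (size s <= d)%N).

Definition max_in_Ass (J : seq R) : Prop :=
  exists f : R, forall g : R, in_ideal J (g * f) <-> in_ideal max_ideal g.

End Defs.

(* Main.v *)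
Require Import Defs.
From HB Require Import structures.
From mathcomp Require Import all_boot all_order all_algebra.
From mathcomp Require Import mpoly.
From mathcomp Require Import zify.
Set Implicit Arguments. Unset Strict Implicit. Unset Printing Implicit Defensive.
Import GRing.Theory.
Section Comb.
Variable n : nat.
Hypothesis n_gt0 : 0 < n.

Definition cnt (s : seq nat) (p : nat) : nat := count (fun t => t %% n == p) s.

Lemma cnt_cat s1 s2 p : cnt (s1 ++ s2) p = cnt s1 p + cnt s2 p.
Proof. by rewrite /cnt count_cat. Qed.

Lemma cnt_cons a s p : cnt (a :: s) p = (a %% n == p) + cnt s p.
Proof. by []. Qed.

Lemma cnt_shift r m p : cnt (iota (n + r) m) p = cnt (iota r m) p.
Proof.
rewrite /cnt iotaDl count_map; apply: eq_count => t /=.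
by rewrite modnDl.
Qed.

Lemma cnt_iota0 p : p < n -> cnt (iota 0 n) p = 1.
Proof.
move=> pn; rewrite /cnt (eq_in_count (a2 := pred1 p)); last first.
  by move=> t; rewrite mem_iota add0n => /andP[_ tn] /=; rewrite modn_small.
by rewrite count_uniq_mem ?iota_uniq // mem_iota pn.
Qed.

Lemma cnt_iota_n r p : p < n -> cnt (iota r n) p = 1.
Proof.
move=> pn; elim: r => [|r IH]; first exact: cnt_iota0.
have e1 : iota r n = iota r 1 ++ iota (r + 1) (n - 1).
  by rewrite -iotaD subnKC.
have e2 : iota r.+1 n = iota (r+1) (n - 1) ++ iota (n + r) 1.
  rewrite (_ : n + r = r + 1 + (n - 1)); last by lia.
  by rewrite -iotaD subnK // addn1.
rewrite e2 cnt_cat cnt_shift addnC -cnt_cat -e1 //.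
Qed.

Lemma cnt_iota_nD r m p : p < n -> cnt (iota r (n + m)) p = 1 + cnt (iota r m) p.
Proof.
by move=> pn; rewrite iotaD cnt_cat cnt_iota_n // [r + n]addnC cnt_shift.
Qed.

Fixpoint blk (r j : nat) : seq nat :=
  if j is j'.+1 then r :: blk (r + 3) j' else [::].

Definition gl (L : seq nat) : seq nat := flatten [seq [:: a; a.+1; a.+2] | a <- L].

Lemma size_blk r j : size (blk r j) = j.
Proof. by elim: j r => [|j IH] r //=; rewrite IH. Qed.

Lemma gl_cat L1 L2 : gl (L1 ++ L2) = gl L1 ++ gl L2.
Proof. by rewrite /gl map_cat flatten_cat. Qed.

Lemma gl_blk r j : gl (blk r j) = iota r (3 * j).
Proof.
elim: j r => [|j IH] r; first by rewrite /= ?muln0.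
change (gl (blk r j.+1)) with ([:: r; r.+1; r.+2] ++ gl (blk (r+3) j)).
by rewrite IH mulnS iotaD.
Qed.

Definition sw (d : nat) := iota 0 n ++ iota 0 n ++ iota 4 (n - 4) ++ iota 0 (3 * d).

Lemma size_sw d : 4 <= n -> size (sw d) < 3 * (n - 1 + d).
Proof. move=> n4; rewrite /sw !size_cat !size_iota. lia. Qed.

Lemma cnt_compl a p : p < n -> cnt (iota a (n - 1)) p + ((a + n - 1) %% n == p) = 1.
Proof.
move=> pn; transitivity (cnt (iota a ((n-1)+1)) p); last by rewrite subnK // cnt_iota_n.
by rewrite iotaD cnt_cat /cnt /= addn0 addnBA.
Qed.

Lemma comb (d : nat) (a : nat) : 4 <= n -> n %% 3 != 0 -> a < n ->
  exists L, size L = n - 1 + d /\ forall p, p < n -> cnt (a :: sw d) p = cnt (gl L) p.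
Proof.
move=> n4 n3 an.
have [q [Hq|Hq]] : exists q, n = 3 * q + 4 \/ n = 3 * q + 5.
  exists ((n - 4) %/ 3).
  have := divn_eq (n - 4) 3; have := ltn_pmod (n - 4) (isT : 0 < 3).
  have : (n - 4) %% 3 != 2.
    apply: contra n3 => /eqP h; apply/eqP.
    by rewrite -(subnK n4) -modnDm h.
  lia.
- exists (blk 4 q ++ blk a (q + 1) ++ blk (a + n - 1) (q + 2) ++ blk 0 d).
  split; first by rewrite !size_cat !size_blk; lia.
  move=> p pn; rewrite !gl_cat !gl_blk /sw !cnt_cons !cnt_cat !cnt_iota0 //.
  have -> : 3 * q = n - 4 by lia.
  have -> : 3 * (q + 1) = n - 1 by lia.
  have -> : 3 * (q + 2) = n + 2 by lia.
  rewrite cnt_iota_nD // /= addn0 (_ : (a + n - 1).+1 = a + n); last by lia.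
  rewrite modnDr.
  have := cnt_compl a pn. lia.
- exists (blk 2 (q + 1) ++ blk 4 (q + 1) ++ blk a (q + 2) ++ blk 0 d).
  split; first by rewrite !size_cat !size_blk; lia.
  move=> p pn; rewrite !gl_cat !gl_blk /sw !cnt_cons !cnt_cat !cnt_iota0 //.
  have -> : 3 * (q + 1) = n - 2 by lia.
  have -> : 3 * (q + 2) = n + 1 by lia.
  rewrite cnt_iota_nD //.
  have h1 : cnt (iota 4 (n - 2)) p = cnt (iota 4 (n - 4)) p + cnt (iota 0 2) p.
    rewrite (_ : n - 2 = (n - 4) + 2); last by lia.
    by rewrite iotaD cnt_cat (_ : 4 + (n - 4) = n + 0) ?cnt_shift //; lia.
  have h2 : cnt (iota 0 2) p + cnt (iota 2 (n - 2)) p = 1.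
    by rewrite -cnt_cat -iotaD subnKC ?cnt_iota0 //; lia.
  have h3 : cnt (iota a 1) p = (a %% n == p) by rewrite /cnt /= addn0.
  lia.
Qed.
End Comb.

Section Alg.
Variables (K : fieldType) (n : nat).
Hypothesis n_gt2 : 2 < n.
Local Notation R := {mpoly K[n]}.
Local Notation gens := (NI_cycle K n).

Lemma n_gt0 : (0 < n)%N. Proof. lia. Qed.

Definition mon (s : seq nat) : 'X_{1..n} := [multinom cnt n s i | i < n].

Lemma monE s (i : 'I_n) : mon s i = cnt n s i.
Proof. exact: mnmE. Qed.

Lemma mon_cat s1 s2 : mon (s1 ++ s2) = (mon s1 + mon s2)%MM.
Proof. by apply/mnmP=> i; rewrite mnmDE !monE cnt_cat. Qed.

Lemma mon_nil : mon [::] = 0%MM.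
Proof. by apply/mnmP=> i; rewrite !mnmE. Qed.

Lemma mon_eq s1 s2 : (forall p, (p < n)%N -> cnt n s1 p = cnt n s2 p) -> mon s1 = mon s2.
Proof. by move=> h; apply/mnmP=> i; rewrite !monE h. Qed.

Lemma sum_ind a : (\sum_(i < n) (a %% n == i) = 1)%N.
Proof.
rewrite (bigD1 (Ordinal (ltn_pmod a n_gt0))) //= eqxx big1 // => i.
by rewrite eq_sym -val_eqE /= => /negbTE ->.
Qed.

Lemma mdeg_mon s : mdeg (mon s) = size s.
Proof.
rewrite mdegE; elim: s => [|a s IH]; first by rewrite big1 // => i; rewrite mnmE.
rewrite (eq_bigr (fun i : 'I_n => (a %% n == i) + mon s i)%N); last first.
  by move=> i _; rewrite !monE.
by rewrite big_split /= IH sum_ind.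
Qed.

Lemma mon1 (i : 'I_n) : mon [:: val i] = U_(i)%MM.
Proof.
apply/mnmP=> j; rewrite monE mnm1E /cnt /= addn0 modn_small //.
Qed.

Lemma modS_eq x : (x < n)%N -> x.+1 %% n = if x.+1 == n then 0%N else x.+1.
Proof. by move=> xn; case: eqP => [->|h]; [rewrite modnn | rewrite modn_small //; lia]. Qed.

Lemma adj_cnt (i p : 'I_n) :
  ((cycle_adj i p || (p == i)) : nat) =
  cnt n [:: (i + n).-1; i + n; (i+n).+1] p.
Proof.
rewrite /cnt /= addn0 /cycle_adj.
have Hi := ltn_ord i.
have e1 : (i + n).-1 %% n = if nat_of_ord i == 0%N then n.-1 else (nat_of_ord i).-1.
  case: eqP => [->|h]; first by rewrite add0n modn_small //; lia.
  by rewrite (_ : (i+n).-1 = (nat_of_ord i).-1 + n); [rewrite modnDr modn_small; lia | lia].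
have e2 : (i + n) %% n = nat_of_ord i by rewrite modnDr modn_small.
have e3 : (i + n).+1 %% n = (nat_of_ord i).+1 %% n by rewrite -addSn modnDr.
rewrite e1 e2 e3 !modS_eq ?ltn_ord //.
case: i Hi e1 e2 e3 => i Hi; case: p => p Hp /= _ _ _.
rewrite -val_eqE /=.
do ![case: ifP => /eqP ?] ; do ![case: eqP => ?] => //=; lia.
Qed.

Definition trip (i : nat) := [:: (i + n).-1; i + n; (i+n).+1].

Lemma gen_eq (i : 'I_n) :
  (\prod_(j : 'I_n | cycle_adj i j || (j == i)) 'X_j =
  'X_[mon (trip i)] :> R)%R.
Proof.
rewrite -(big_morph (fun m => 'X_[m] : R) (@mpolyXD _ _) (@mpolyX0 _ _)).
congr 'X_[_]; apply/mnmP=> p; rewrite mnm_sumE monE -adj_cnt.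
rewrite big_mkcond (bigD1 p) //= big1 => [|j jp].
  by rewrite mnm1E eqxx; case: ifP.
by rewrite mnm1E (negbTE jp); case: ifP.
Qed.

Lemma size_gens : size gens = n.
Proof. by rewrite /NI_cycle /NI size_map size_enum_ord. Qed.

Lemma nth_gens (i : 'I_n) :
  nth 0%R gens i = (\prod_(j : 'I_n | cycle_adj i j || (j == i)) 'X_j)%R.
Proof.
by rewrite /NI_cycle /NI (nth_map i) ?size_enum_ord // nth_ord_enum.
Qed.

Lemma nth_gens_a (a : nat) :
  nth 0%R gens ((a + 1) %% n) = 'X_[mon [:: a; a.+1; a.+2]].
Proof.
have Ha := ltn_pmod (a + 1) n_gt0.
have -> : ((a + 1) %% n)%N = Ordinal Ha by [].
rewrite nth_gens gen_eq; congr 'X_[_]; apply: mon_eq => p pn.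
rewrite /cnt /= !addn0 /=.
have -> : ((a + 1) %% n + n).-1 = (a + 1) %% n + (n - 1) by lia.
have -> : ((a + 1) %% n + n).+1 = (a + 1) %% n + (n + 1) by lia.
rewrite !modnDml.
have -> : (a + 1 + (n - 1) = a + n)%N by lia.
have -> : (a + 1 + (n + 1) = a.+2 + n)%N by lia.
by rewrite !modnDr addn1.
Qed.

Section Ideal.
Local Open Scope ring_scope.

Lemma in_gen (J : seq R) (p : R) (i : nat) : (i < size J)%N -> in_ideal J (p * nth 0 J i).
Proof.
move=> Hi; exists (fun j : 'I_(size J) => if val j == i then p else 0).
rewrite (bigD1 (Ordinal Hi)) //= eqxx big1 ?addr0 // => j.
by rewrite -val_eqE /= => /negbTE ->; rewrite mul0r.
Qed.

Lemma in0 (J : seq R) : in_ideal J 0.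
Proof. by exists (fun _ => 0); rewrite big1 // => i _; rewrite mul0r. Qed.

Lemma inD (J : seq R) p q : in_ideal J p -> in_ideal J q -> in_ideal J (p + q).
Proof.
move=> [c1 ->] [c2 ->]; exists (fun i => c1 i + c2 i).
by rewrite -big_split; apply: eq_bigr => i _; rewrite mulrDl.
Qed.

Lemma inM (J : seq R) c p : in_ideal J p -> in_ideal J (c * p).
Proof.
move=> [d ->]; exists (fun i => c * d i).
by rewrite mulr_sumr; apply: eq_bigr => i _; rewrite mulrA.
Qed.

Lemma in_sum (J : seq R) (I : Type) (r : seq I) (P : pred I) (F : I -> R) :
  (forall i, P i -> in_ideal J (F i)) -> in_ideal J (\sum_(i <- r | P i) F i).
Proof. by move=> h; apply: big_ind => //; [apply: in0 | apply: inD]. Qed.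

Lemma ltgen x : (x %% n < size gens)%N.
Proof. by rewrite size_gens ltn_pmod // n_gt0. Qed.

Lemma mon_gl L : mon (gl L) = (\sum_(a <- L) mon [:: a; a.+1; a.+2])%MM.
Proof.
elim: L => [|a L IH]; first by rewrite big_nil mon_nil.
by rewrite big_cons -IH -mon_cat.
Qed.

Lemma pow_mem (L : seq nat) (p : R) :
  in_ideal (ideal_pow gens (size L)) (p * 'X_[mon (gl L)]).
Proof.
pose F : {ffun 'I_(size L) -> 'I_(size gens)} :=
  [ffun l : 'I_(size L) => Ordinal (ltgen (nth 0%N L l + 1)%N)].
have Fin : F \in enum {ffun 'I_(size L) -> 'I_(size gens)} by rewrite mem_enum.
have <- : nth 0 (ideal_pow gens (size L)) (index F (enum {ffun 'I_(size L) -> 'I_(size gens)}))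
   = 'X_[mon (gl L)].
  rewrite /ideal_pow (nth_map F) ?index_mem // nth_index //.
  under eq_bigr do rewrite ffunE /= nth_gens_a.
  rewrite -(big_morph (fun m => 'X_[m] : R) (@mpolyXD _ _) (@mpolyX0 _ _)).
  by rewrite mon_gl (big_nth 0%N) big_mkord.
apply: in_gen.
have -> : size (ideal_pow gens (size L)) = size (enum {ffun 'I_(size L) -> 'I_(size gens)}).
  exact: size_map.
by rewrite index_mem.
Qed.

Lemma coefXM (c : R) M m : (mdeg m < mdeg M)%N -> (c * 'X_[M])@_m = 0.
Proof.
move=> h; rewrite mcoeffMr big1 // => k /eqP mE.
rewrite mcoeffX; case: eqP => [e|_]; last by rewrite mulr0.
by exfalso; move: h; rewrite mE mdegD -e; lia.
Qed.

Lemma pow_elem k q : q \in ideal_pow gens k -> exists M, q = 'X_[M] /\ mdeg M = (3 * k)%N.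
Proof.
move=> /mapP [F _ ->].
have h j : nth 0 gens (F j) = 'X_[mon [:: (F j + n).-1; ((F j + n).-1).+1; ((F j + n).-1).+2]].
  rewrite -nth_gens_a; congr nth.
  have Hj : (F j < n)%N by apply: (leq_trans (ltn_ord (F j))); rewrite size_gens.
  by rewrite (_ : ((F j + n).-1 + 1 = F j + n)%N) ?modnDr ?modn_small //; lia.
under eq_bigr do rewrite h.
rewrite -(big_morph (fun m => 'X_[m] : R) (@mpolyXD _ _) (@mpolyX0 _ _)).
eexists; split; first by [].
rewrite mdeg_sum; under eq_bigr do rewrite mdeg_mon /=.
by rewrite sum_nat_const card_ord mulnC.
Qed.

Lemma pow_coef k q m : in_ideal (ideal_pow gens k) q -> (mdeg m < 3 * k)%N -> q@_m = 0.
Proof.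
move=> [c ->] h.
rewrite (big_morph (mcoeff m) (@mcoeffD _ _ m) (@mcoeff0 _ _ m)) big1 // => i _.
have [M [-> hM]] := pow_elem (mem_nth 0 (ltn_ord i)).
by apply: coefXM; rewrite hM.
Qed.

Lemma size_max : size (max_ideal K n) = n.
Proof. by rewrite /max_ideal size_map size_enum_ord. Qed.

Lemma nth_max (i : 'I_n) : nth 0 (max_ideal K n) i = 'X_i.
Proof. by rewrite /max_ideal (nth_map i) ?size_enum_ord // nth_ord_enum. Qed.

Lemma in_maxX (i : 'I_n) p : in_ideal (max_ideal K n) (p * 'X_i).
Proof. by rewrite -nth_max; apply: in_gen; rewrite size_max. Qed.

Lemma coef0_in (g : R) : g@_0%MM = 0 -> in_ideal (max_ideal K n) g.
Proof.
move=> g0; rewrite (mpolyE g); apply: in_sum => m _.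
case: (pickP (fun i : 'I_n => m i != 0%N)) => [i mi|h].
  have -> : 'X_[m] = 'X_[m - U_(i)] * 'X_i :> R by rewrite -mpolyXD submK // lep1mP.
  by rewrite scalerAl; apply: in_maxX.
have -> : m = 0%MM.
  by apply/mnmP => i; rewrite mnm0E; move: (h i) => /= /negbFE /eqP.
by rewrite g0 scale0r; apply: in0.
Qed.

Lemma crit k (s : seq nat) : (size s < 3 * k)%N ->
  (forall i : 'I_n, exists L, size L = k /\ mon (nat_of_ord i :: s) = mon (gl L)) ->
  has_depth (ideal_pow gens k) 0 /\ max_in_Ass (ideal_pow gens k).
Proof.
move=> hs hL.
have fnot : ~ in_ideal (ideal_pow gens k) 'X_[mon s].
  move=> /(pow_coef (m := mon s)); rewrite mdeg_mon mcoeffX eqxx => /(_ hs) /eqP.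
  by rewrite oner_eq0.
have xf : forall i : 'I_n, in_ideal (ideal_pow gens k) ('X_i * 'X_[mon s]).
  move=> i; have [L [hsz he]] := hL i.
  rewrite -mpolyXD -mon1 -mon_cat /= he -hsz -[X in in_ideal _ X]mul1r.
  exact: pow_mem.
have ass_r : forall g, in_ideal (max_ideal K n) g -> in_ideal (ideal_pow gens k) (g * 'X_[mon s]).
  move=> g [c ->]; rewrite mulr_suml; apply: in_sum => i _.
  have Hi : (i < n)%N by apply: (leq_trans (ltn_ord i)); rewrite size_max.
  rewrite -[nat_of_ord i]/(nat_of_ord (Ordinal Hi)) nth_max -mulrA.
  by apply: inM; apply: xf.
split.
  split.
    exists [::]; split => //; split; first by [].
    split; first by [].
    rewrite cats0 => h; have := pow_coef (m := 0%MM) h.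
    rewrite mdeg0 mcoeff1 eqxx => /(_ _) /eqP; rewrite oner_eq0 => H.
    have h3 : (0 < 3 * k)%N by lia.
    by have := H h3.
  case=> [//|s0 s'] [hm [hz _]]; exfalso.
  have := hz 0%N isT 'X_[mon s]; rewrite /= ?take0 cats0 => H.
  by apply: fnot; apply: H; apply: ass_r; apply: (hm 0%N isT).
exists 'X_[mon s] => g; split; last exact: ass_r.
move=> /(pow_coef (m := mon s)) h; apply: coef0_in.
rewrite -(mcoeffMX g (mon s) 0) addm0; apply: h.
by rewrite mdeg_mon.
Qed.

End Ideal.
End Alg.

Local Open Scope ring_scope.

Theorem corollary3p7 (K : fieldType) (n : nat) :
  (4 <= n)%N -> (n %% 3 != 0)%N ->
  has_depth (ideal_pow (NI_cycle K n) n.-1) 0 /\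
  max_in_Ass (ideal_pow (NI_cycle K n) n.-1) /\
  (exists k0 : nat, forall k : nat, (k0 <= k)%N ->
      has_depth (ideal_pow (NI_cycle K n) k) 0).
Proof.
move=> n4 n3.
have n2 : (2 < n)%N by lia.
have n0 : (0 < n)%N by lia.
have key : forall d, has_depth (ideal_pow (NI_cycle K n) (n.-1 + d)) 0 /\
                     max_in_Ass (ideal_pow (NI_cycle K n) (n.-1 + d)).
  move=> d; apply: (@crit K n n2 _ (sw n d)).
    have := size_sw n0 d n4; rewrite (_ : (n - 1 + d = n.-1 + d)%N) //; lia.
  move=> i; have [L [hsz hc]] := comb n0 d n4 n3 (ltn_ord i).
  exists L; split; first by rewrite hsz; lia.
  by apply: mon_eq => p pn; apply: hc.
have [h1 h2] := key 0%N; rewrite addn0 in h1 h2.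
split=> //; split=> //.
exists n.-1 => k hk; have := key (k - n.-1)%N; by rewrite subnKC // => -[].
Qed.
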